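(* Let $q=2^h$ and let $$U=\left\{\left(x,\,y,\,x^q+y^{q^2},\,x^{q^2}+y^q+y^{q^2}\right): x,y\in\mathbb F_{q^4}\right\}\subseteq\mathbb F_{q^4}^4.$$ Then $U$ is maximum scattered if and only if $h\not\equiv 2\pmod 4$.
   Context: $U$ is an $\mathbb F_q$-subspace of $\mathbb F_{q^4}^4$. An $\mathbb F_q$-subspace $U$ of $\mathbb F_{q^m}^k$ is scattered if $\dim_{\mathbb F_q}(U\cap\langle w\rangle_{\mathbb F_{q^m}})\le 1$ for every nonzero $w\in\mathbb F_{q^m}^k$; a scattered subspace has $\mathbb F_q$-dimension at most $km/2$, and it is called maximum scattered if its $\mathbb F_q$-dimension equals $km/2$ (here $km/2=8$). *)

(* Defs.v *)
From HB Require Import structures.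
From mathcomp Require Import all_boot all_order all_algebra.
Unset Strict Implicit. Unset Printing Implicit Defensive.
Import GRing.Theory.
Local Open Scope ring_scope.

Section Scattered.
Variable F : finFieldType.
(* q is the order of the subfield F_q of F, described as {a | a^q = a}. *)
Variable q : nat.
Variable k : nat.

Definition Fq : pred F := fun a => a ^+ q == a.

Definition Fq_lin_indep (d : nat) (v : 'I_d -> 'rV[F]_k) : Prop :=
  forall c : 'I_d -> F, (forall i, c i \in Fq) ->
    \sum_(i < d) c i *: v i = 0 -> forall i, c i = 0.

Definition Fq_dim (S : pred 'rV[F]_k) (d : nat) : Prop :=
  exists v : 'I_d -> 'rV[F]_k,
    [/\ forall i, v i \in S, @Fq_lin_indep d v &
        forall u, u \in S -> exists2 c : 'I_d -> F,
           (forall i, c i \in Fq) & u = \sum_(i < d) c i *: v i].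

Definition Fspan (w : 'rV[F]_k) : pred 'rV[F]_k :=
  fun u => [exists l : F, u == l *: w].

Definition scattered (U : pred 'rV[F]_k) : Prop :=
  forall w : 'rV[F]_k, w != 0 ->
    exists2 d, (d <= 1)%N & Fq_dim [predI U & Fspan w] d.

(* maximum scattered: scattered with F_q-dimension k*m/2, where #|F| = q^m *)
Definition max_scattered (m : nat) (U : pred 'rV[F]_k) : Prop :=
  scattered U /\ Fq_dim U ((k * m) %/ 2).
End Scattered.

Definition U_h (h : nat) (F : finFieldType) : pred 'rV[F]_4 :=
  let q := (2 ^ h)%N in
  fun u => [exists x : F, exists y : F,
    u == \row_(i < 4) [:: x; y; x ^+ q + y ^+ (q ^ 2);
                          x ^+ (q ^ 2) + y ^+ q + y ^+ (q ^ 2)]`_i].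

(* Main.v *)
Require Import Defs.
From HB Require Import structures.
From mathcomp Require Import all_boot all_order all_algebra.
From mathcomp Require Import all_field all_fingroup all_solvable.
From mathcomp Require Import ring zify.
Set Implicit Arguments. Unset Strict Implicit. Unset Printing Implicit Defensive.
Import GRing.Theory.
Local Open Scope ring_scope.

Section Main.
Variable F : finFieldType.
Variable h : nat.
Hypothesis hcard : #|F| = ((2 ^ h) ^ 4)%N.
Local Notation q := (2 ^ h)%N.

Lemma char2 : (2%:R : F) = 0.
Proof.
have: (2 \in [pchar F])%N by apply: (@card_finPcharP _ 2 (h * 4)); rewrite // hcard expnM.
exact: pcharf0.
Qed.

Lemma c2 (X Y G : F) : X = Y + 2%:R * G -> X = Y.
Proof. by rewrite char2 mul0r addr0. Qed.

Lemma addxx (x : F) : x + x = 0.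
Proof. by apply: (@c2 _ _ x); ring. Qed.

Lemma oppE (x : F) : - x = x.
Proof. by apply: (@c2 _ _ (- x)); ring. Qed.

Lemma add_eq0 (x y : F) : (x + y == 0) = (x == y).
Proof. by rewrite addr_eq0 oppE. Qed.

Lemma frobD k (x y : F) : (x + y) ^+ (2 ^ k) = x ^+ (2 ^ k) + y ^+ (2 ^ k).
Proof.
elim: k x y => [|k IH] x y; first by rewrite !expr1.
rewrite expnS !exprM.
have -> : (x + y) ^+ 2 = x ^+ 2 + y ^+ 2 by apply: (@c2 _ _ (x * y)); ring.
by rewrite IH.
Qed.

Definition s (x : F) := x ^+ q.

Lemma q_gt0 : (0 < q)%N. Proof. by rewrite expn_gt0. Qed.

Lemma sD x y : s (x + y) = s x + s y. Proof. exact: frobD. Qed.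
Lemma sM x y : s (x * y) = s x * s y. Proof. exact: exprMn. Qed.
Lemma s0 : s 0 = 0. Proof. by rewrite /s expr0n eqn0Ngt q_gt0. Qed.
Lemma s1 : s 1 = 1. Proof. exact: expr1n. Qed.
Lemma sN x : s (- x) = - s x. Proof. by rewrite !oppE. Qed.
Lemma sB x y : s (x - y) = s x - s y. Proof. by rewrite sD sN. Qed.
Lemma sV x : s (x^-1) = (s x)^-1. Proof. exact: exprVn. Qed.
Lemma s4 x : s (s (s (s x))) = x.
Proof.
rewrite /s -!exprM; rewrite -[X in _ = X]expf_card; congr (_ ^+ _).
by rewrite hcard !expnS expn0 muln1 !mulnA.
Qed.
Lemma s_eq0 x : (s x == 0) = (x == 0).
Proof. by rewrite /s expf_eq0 q_gt0. Qed.
Lemma s_inj : injective s.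
Proof. by move=> x y H; rewrite -(s4 x) -(s4 y) H. Qed.
Lemma s2E x : x ^+ (q ^ 2) = s (s x).
Proof. by rewrite /s -exprM mulnn. Qed.

Lemma neqT1 (T : F) : T <> T + 1.
Proof.
move/(congr1 (fun z => z - T)); rewrite subrr addrC addKr => /eqP.
by rewrite eq_sym oner_eq0.
Qed.

Lemma cyc_contra (T : F) : T ^+ 4 = T + 1 -> s T = T + 1 -> (h %% 4 == 2)%N.
Proof.
move=> H4 Hs.
have H16 : T ^+ 16 = T.
  rewrite (_ : 16 = 4 * 4)%N // exprM H4 (_ : 4 = 2 ^ 2)%N // frobD expr1n H4.
  by rewrite -addrA addxx addr0.
have Hm : forall m, T ^+ (2 ^ (4 * m)) = T.
  elim=> [|m IH]; first by rewrite expr1.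
  by rewrite mulnS expnD exprM H16 IH.
move: Hs; rewrite /s {1}(divn_eq h 4) [(_ * 4)%N]mulnC expnD exprM Hm.
have : (h %% 4 < 4)%N by rewrite ltn_mod.
case: (h %% 4)%N => [|[|[|[|r]]]] // _.
- by rewrite expr1 => /neqT1.
- move=> H2; exfalso.
  have : T ^+ 4 = T.
    rewrite (_ : 4 = 2 * 2)%N // exprM H2 (_ : 2 = 2 ^ 1)%N // frobD expr1n H2.
    by rewrite -addrA addxx addr0.
  by rewrite H4 => /esym/neqT1.
- move=> H8; exfalso.
  have H8' : T ^+ 8 = T ^+ 2 + 1.
    by rewrite (_ : 8 = 4 * 2)%N // exprM H4 (_ : 2 = 2 ^ 1)%N // frobD expr1n.
  have HT2 : T ^+ 2 = T.
    by apply: (addIr 1); rewrite -H8'.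
  have : T ^+ 4 = T by rewrite (_ : 4 = 2 * 2)%N // exprM HT2 HT2.
  by rewrite H4 => /esym/neqT1.
Qed.


Definition E0f (l0 l1 l2 l3 y0 y1 y2 y3 : F) :=
  (l1+l0) * (l2+l1) * y1 + (l2+l1) * (l2+l0) * y2 + (l2+l0) * (l3+l1) * y3.
Definition Pf (l0 l1 l2 l3 : F) := (l0+l1) * (l2+l3).
Definition nf (l0 l1 l2 l3 : F) := (l0+l2) * (l1+l3).
Definition Df (l0 l1 l2 l3 : F) :=
  Pf l0 l1 l2 l3 ^+ 4 + nf l0 l1 l2 l3 ^+ 3  *  Pf l0 l1 l2 l3 + nf l0 l1 l2 l3 ^+ 4.

Lemma E0_lem (l0 l1 l2 l3 x2 y0 y1 y2 y3 : F) :
  l2 * x2 + l1 * y1 + l2 * y2 = l0 * (x2+y1+y2) -> l2 * x2 + l3 * y3 = l1 * (x2+y3) ->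
  E0f l0 l1 l2 l3 y0 y1 y2 y3 = 0.
Proof.
move=> hB hA1.
have -> : E0f l0 l1 l2 l3 y0 y1 y2 y3 = ((l2+l1) * ((l2 * x2 + l1 * y1 + l2 * y2) - l0 * (x2+y1+y2)) + (l2+l0) * ((l2 * x2 + l3 * y3) - l1 * (x2+y3))).
  by apply: (@c2 _ _ (l0 * l2 * y1 + l0 * l1 * y1 + l0 * l2 * y2 + l0 * l1 * y2 + l1 * l2 * y3 + l0 * l1 * y3 + -l2^+2 * x2 + l0 * l1 * x2)); rewrite /E0f; ring.
by rewrite hB hA1 !subrr !mulr0 addr0.
Qed.

Lemma cramer (l0 l1 l2 l3 y0 y1 y2 y3 : F) :
  Df l0 l1 l2 l3  *  y0 =
  ((l2+l1) * (l3+l2) * (l3+l2) * (l0+l3) * (l1+l0) * (l1+l3) + (l3+l2) * (l3+l1) * (l0+l2) * (l1+l3) * (l1+l3) * (l2+l0))  *  E0f l0 l1 l2 l3 y0 y1 y2 y3 + ((l1+l0) * (l2+l1) * (l3+l2) * (l0+l3) * (l1+l3) * (l2+l0) + (l2+l1) * (l2+l0) * (l3+l2) * (l0+l3) * (l1+l0) * (l1+l3) + (l2+l0) * (l3+l1) * (l0+l2) * (l1+l3) * (l1+l3) * (l2+l0))  *  E0f l1 l2 l3 l0 y1 y2 y3 y0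
  + ((l1+l0) * (l2+l1) * (l3+l2) * (l3+l1) * (l1+l3) * (l2+l0) + (l2+l1) * (l2+l0) * (l3+l2) * (l3+l1) * (l1+l0) * (l1+l3) + (l2+l0) * (l3+l1) * (l2+l1) * (l3+l2) * (l1+l0) * (l1+l3))  *  E0f l2 l3 l0 l1 y2 y3 y0 y1 + ((l1+l0) * (l2+l1) * (l2+l1) * (l3+l2) * (l3+l2) * (l0+l3) + (l2+l1) * (l2+l0) * (l3+l2) * (l3+l1) * (l0+l2) * (l1+l3) + (l2+l0) * (l3+l1) * (l2+l1) * (l3+l2) * (l0+l2) * (l1+l3))  *  E0f l3 l0 l1 l2 y3 y0 y1 y2.
Proof. by apply: (@c2 _ _ (l0^+4 * l2^+3 * l3 * y0 + l0^+3 * l1 * l2^+4 * y0 + -10%:R * l0^+3 * l1 * l2^+3 * l3 * y0 + -l0^+4 * l2^+2 * l3^+2 * y0 + -20%:R * l0^+3 * l1 * l2^+2 * l3^+2 * y0 + -l0^+2 * l1^+2 * l2^+4 * y0 + -20%:R * l0^+2 * l1^+2 * l2^+3 * l3 * y0 + -38%:R * l0^+2 * l1^+2 * l2^+2 * l3^+2 * y0 + -l0^+4 * l2 * l3^+3 * y0 + -10%:R * l0^+3 * l1 * l2 * l3^+3 * y0 + -20%:R * l0^+2 * l1^+2 * l2 * l3^+3 * y0 + -l0 * l1^+3 * l2^+4 * y0 + -10%:R * l0 * l1^+3 * l2^+3 * l3 * y0 + -20%:R * l0 * l1^+3 * l2^+2 * l3^+2 * y0 + -10%:R * l0 * l1^+3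 * l2 * l3^+3 * y0 + l0^+4 * l3^+4 * y0 + -l0^+3 * l1 * l3^+4 * y0 + -l0^+2 * l1^+2 * l3^+4 * y0 + l0 * l1^+3 * l3^+4 * y0 + l1^+4 * l2^+4 * y0 + -l1^+4 * l2^+3 * l3 * y0 + -l1^+4 * l2^+2 * l3^+2 * y0 + l1^+4 * l2 * l3^+3 * y0 + -3%:R * l0^+4 * l1^+3 * l2 * y0 + -3%:R * l0^+4 * l1^+3 * l3 * y0 + -3%:R * l0^+3 * l1^+4 * l2 * y0 + -3%:R * l0^+3 * l1^+4 * l3 * y0 + -10%:R * l0^+4 * l1^+2 * l2 * l3 * y0 + -6%:R * l0^+4 * l1^+2 * l3^+2 * y0 + -20%:R * l0^+3 * l1^+3 * l2 * l3 * y0 + -10%:R * l0^+3 * l1^+3 * l3^+2 * y0 + -10%:R * l0^+3 * l1^+3 * l2^+2 * y0 + -6%:R * l0^+2 * l1^+4 * l2^+2 * y0 + -10%:R * l0^+2 * l1^+4 * l2 * l3 * y0 + -32%:R * l0^+3 * l1^+2 * l2^+2 * l3 * y0 + -33%:R * l0^+3 * l1^+2 * l2 * l3^+2 * y0 + -33%:R * l0^+2 * l1^+3 * l2^+2 * l3 * y0 + -32%:R * l0^+2 * l1^+3 * l2 * l3^+2 * y0 + -10%:R * l0^+4 * l1 * l2 * l3^+2 * y0 + -2%:R * l0^+4 * l1 * l3^+3 * y0 + -10%:R * l0^+3 * l1^+2 * l3^+3 * y0 + -10%:R * l0^+2 * l1^+3 * l2^+3 * y0 + -2%:R * l0 * l1^+4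 * l2^+3 * y0 + -10%:R * l0 * l1^+4 * l2^+2 * l3 * y0 + -32%:R * l0^+2 * l1 * l2^+3 * l3^+2 * y0 + -33%:R * l0^+2 * l1 * l2^+2 * l3^+3 * y0 + -33%:R * l0 * l1^+2 * l2^+3 * l3^+2 * y0 + -32%:R * l0 * l1^+2 * l2^+2 * l3^+3 * y0 + -10%:R * l0^+3 * l2^+2 * l3^+3 * y0 + -2%:R * l0^+3 * l2 * l3^+4 * y0 + -10%:R * l0^+2 * l1 * l2 * l3^+4 * y0 + -10%:R * l0^+2 * l2^+3 * l3^+3 * y0 + -6%:R * l0^+2 * l2^+2 * l3^+4 * y0 + -20%:R * l0 * l1 * l2^+3 * l3^+3 * y0 + -10%:R * l0 * l1 * l2^+2 * l3^+4 * y0 + -10%:R * l0 * l1^+2 * l2^+4 * l3 * y0 + -2%:R * l1^+3 * l2^+4 * l3 * y0 + -10%:R * l1^+3 * l2^+3 * l3^+2 * y0 + -10%:R * l0 * l1 * l2^+4 * l3^+2 * y0 + -6%:R * l1^+2 * l2^+4 * l3^+2 * y0 + -10%:R * l1^+2 * l2^+3 * l3^+3 * y0 + -3%:R * l0 * l2^+4 * l3^+3 * y0 + -3%:R * l0 * l2^+3 * l3^+4 * y0 + -3%:R * l1 * l2^+4 * l3^+3 * y0 + -3%:R * l1 * l2^+3 * l3^+4 * y0 + -60%:R * l0 * l1^+3 * l2^+2 * l3^+2 * y1 + -26%:R * l0 * l1^+4 * l2 * l3^+2 * y1 + -60%:R * l0^+2 * l1^+2 * l2^+2 * l3^+2 *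 y1 + -46%:R * l0^+2 * l1^+3 * l2 * l3^+2 * y1 + -64%:R * l0 * l1^+2 * l2^+3 * l3^+2 * y2 + -64%:R * l0^+2 * l1^+2 * l2^+2 * l3^+2 * y2 + -40%:R * l0 * l1^+3 * l2^+2 * l3^+2 * y2 + -32%:R * l0^+2 * l1^+3 * l2 * l3^+2 * y2 + -60%:R * l0 * l1^+2 * l2^+2 * l3^+3 * y3 + -45%:R * l0 * l1^+3 * l2^+2 * l3^+2 * y3 + -51%:R * l0^+2 * l1^+2 * l2 * l3^+3 * y3 + -36%:R * l0^+2 * l1^+3 * l2 * l3^+2 * y3 + -44%:R * l0 * l1^+2 * l2^+2 * l3^+3 * y1 + -28%:R * l0 * l1^+3 * l2 * l3^+3 * y1 + -34%:R * l0^+2 * l1 * l2^+2 * l3^+3 * y1 + -38%:R * l0^+2 * l1^+2 * l2 * l3^+3 * y1 + -40%:R * l0 * l1 * l2^+3 * l3^+3 * y2 + -40%:R * l0^+2 * l1 * l2^+2 * l3^+3 * y2 + -40%:R * l0 * l1^+2 * l2^+2 * l3^+3 * y2 + -32%:R * l0^+2 * l1^+2 * l2 * l3^+3 * y2 + -33%:R * l0 * l1 * l2^+2 * l3^+4 * y3 + -30%:R * l0^+2 * l1 * l2 * l3^+4 * y3 + -14%:R * l0^+3 * l1 * l2^+2 * l3^+2 * y1 + -22%:R * l0^+3 * l1^+2 * l2 * l3^+2 * y1 + -40%:R * l0^+2 * l1 * l2^+3 * l3^+2 * y2 + -16%:R * l0^+3 * l1 * l2^+2 * l3^+2 * y2 +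 -20%:R * l0^+3 * l1^+2 * l2 * l3^+2 * y2 + -45%:R * l0^+2 * l1 * l2^+2 * l3^+3 * y3 + -60%:R * l0^+2 * l1^+2 * l2^+2 * l3^+2 * y3 + -16%:R * l0^+3 * l1 * l2 * l3^+3 * y3 + -21%:R * l0^+3 * l1^+2 * l2 * l3^+2 * y3 + -4%:R * l0^+3 * l2^+2 * l3^+3 * y1 + -14%:R * l0^+3 * l1 * l2 * l3^+3 * y1 + -12%:R * l0^+2 * l2^+3 * l3^+3 * y2 + -4%:R * l0^+3 * l2^+2 * l3^+3 * y2 + -12%:R * l0^+3 * l1 * l2 * l3^+3 * y2 + -12%:R * l0^+2 * l2^+2 * l3^+4 * y3 + -4%:R * l0^+3 * l2 * l3^+4 * y3 + -14%:R * l1^+3 * l2^+2 * l3^+3 * y1 + -4%:R * l1^+4 * l2 * l3^+3 * y1 + -16%:R * l1^+2 * l2^+3 * l3^+3 * y2 + -8%:R * l1^+3 * l2^+2 * l3^+3 * y2 + -12%:R * l0 * l1^+3 * l2 * l3^+3 * y2 + -12%:R * l1^+2 * l2^+2 * l3^+4 * y3 + -15%:R * l1^+3 * l2^+2 * l3^+3 * y3 + -21%:R * l0 * l1^+2 * l2 * l3^+4 * y3 + -24%:R * l0 * l1^+3 * l2 * l3^+3 * y3 + -4%:R * l1^+2 * l2^+2 * l3^+4 * y1 + -2%:R * l1^+3 * l2 * l3^+4 * y1 + -11%:R * l0 * l1 * l2^+2 * l3^+4 * y1 + -10%:R * l0 * l1^+2 * l2 * l3^+4 * y1 + -4%:R *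 l1 * l2^+3 * l3^+4 * y2 + -12%:R * l0 * l1 * l2^+2 * l3^+4 * y2 + -4%:R * l1^+2 * l2^+2 * l3^+4 * y2 + -6%:R * l0 * l1^+2 * l2 * l3^+4 * y2 + -3%:R * l1 * l2^+2 * l3^+5 * y3 + -6%:R * l0 * l1 * l2 * l3^+5 * y3 + -7%:R * l0^+2 * l2^+2 * l3^+4 * y1 + -11%:R * l0^+2 * l1 * l2 * l3^+4 * y1 + -8%:R * l0 * l2^+3 * l3^+4 * y2 + -8%:R * l0^+2 * l2^+2 * l3^+4 * y2 + -10%:R * l0^+2 * l1 * l2 * l3^+4 * y2 + -6%:R * l0 * l2^+2 * l3^+5 * y3 + -6%:R * l0^+2 * l2 * l3^+5 * y3 + -38%:R * l0 * l1^+3 * l2^+3 * l3 * y1 + -34%:R * l0 * l1^+4 * l2^+2 * l3 * y1 + -28%:R * l0^+2 * l1^+2 * l2^+3 * l3 * y1 + -44%:R * l0^+2 * l1^+3 * l2^+2 * l3 * y1 + -32%:R * l0 * l1^+2 * l2^+4 * l3 * y2 + -40%:R * l0^+2 * l1^+2 * l2^+3 * l3 * y2 + -40%:R * l0 * l1^+3 * l2^+3 * l3 * y2 + -40%:R * l0^+2 * l1^+3 * l2^+2 * l3 * y2 + -51%:R * l0 * l1^+2 * l2^+3 * l3^+2 * y3 + -30%:R * l0 * l1^+3 * l2^+3 * l3 * y3 + -33%:R * l0^+2 * l1^+3 * l2^+2 * l3 * y3 + -46%:R * l0 * l1^+2 * l2^+3 * l3^+2 * y1 + -26%:R * l0^+2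 * l1 * l2^+3 * l3^+2 * y1 + -32%:R * l0 * l1 * l2^+4 * l3^+2 * y2 + -36%:R * l0 * l1 * l2^+3 * l3^+3 * y3 + -4%:R * l0^+3 * l1 * l2^+3 * l3 * y1 + -14%:R * l0^+3 * l1^+2 * l2^+2 * l3 * y1 + -12%:R * l0^+2 * l1 * l2^+4 * l3 * y2 + -8%:R * l0^+3 * l1 * l2^+3 * l3 * y2 + -16%:R * l0^+3 * l1^+2 * l2^+2 * l3 * y2 + -24%:R * l0^+2 * l1 * l2^+3 * l3^+2 * y3 + -21%:R * l0^+2 * l1^+2 * l2^+3 * l3 * y3 + -15%:R * l0^+3 * l1 * l2^+2 * l3^+2 * y3 + -12%:R * l0^+3 * l1^+2 * l2^+2 * l3 * y3 + -2%:R * l0^+3 * l2^+3 * l3^+2 * y1 + -6%:R * l0^+2 * l2^+4 * l3^+2 * y2 + -4%:R * l0^+3 * l2^+3 * l3^+2 * y2 + -9%:R * l0^+2 * l2^+3 * l3^+3 * y3 + -6%:R * l0^+3 * l2^+2 * l3^+3 * y3 + -22%:R * l1^+3 * l2^+3 * l3^+2 * y1 + -14%:R * l1^+4 * l2^+2 * l3^+2 * y1 + -20%:R * l1^+2 * l2^+4 * l3^+2 * y2 + -16%:R * l1^+3 * l2^+3 * l3^+2 * y2 + -21%:R * l1^+2 * l2^+3 * l3^+3 * y3 + -16%:R * l1^+3 * l2^+3 * l3^+2 * y3 + -14%:R * l1^+2 * l2^+3 * l3^+3 * y1 + -22%:R * l0 * l1 * l2^+3 * l3^+3 * y1 + -12%:R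 * l1 * l2^+4 * l3^+3 * y2 + -10%:R * l1 * l2^+3 * l3^+4 * y3 + -8%:R * l0^+2 * l2^+3 * l3^+3 * y1 + -10%:R * l0 * l2^+4 * l3^+3 * y2 + -9%:R * l0 * l2^+3 * l3^+4 * y3 + -4%:R * l0 * l1^+3 * l2^+4 * y1 + -11%:R * l0 * l1^+4 * l2^+3 * y1 + -2%:R * l0^+2 * l1^+2 * l2^+4 * y1 + -10%:R * l0^+2 * l1^+3 * l2^+3 * y1 + -2%:R * l0 * l1^+2 * l2^+5 * y2 + -6%:R * l0^+2 * l1^+2 * l2^+4 * y2 + -10%:R * l0 * l1^+3 * l2^+4 * y2 + -12%:R * l0^+2 * l1^+3 * l2^+3 * y2 + -9%:R * l0 * l1^+2 * l2^+4 * l3 * y3 + -3%:R * l0 * l1^+3 * l2^+4 * y3 + -6%:R * l0^+2 * l1^+3 * l2^+3 * y3 + -12%:R * l0 * l1^+2 * l2^+4 * l3 * y1 + -3%:R * l0^+2 * l1 * l2^+4 * l3 * y1 + -4%:R * l0 * l1 * l2^+5 * l3 * y2 + -9%:R * l0 * l1 * l2^+4 * l3^+2 * y3 + -l0^+3 * l1 * l2^+4 * y1 + -2%:R * l0^+3 * l1^+2 * l2^+3 * y1 + -2%:R * l0^+2 * l1 * l2^+5 * y2 + -2%:R * l0^+3 * l1 * l2^+4 * y2 + -4%:R * l0^+3 * l1^+2 * l2^+3 * y2 + -6%:R * l0^+2 * l1 * l2^+4 * l3 * y3 + -3%:R * l0^+2 * l1^+2 * l2^+4 * y3 + -6%:R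 * l0^+3 * l1 * l2^+3 * l3 * y3 + -3%:R * l0^+3 * l1^+2 * l2^+3 * y3 + -l0^+3 * l2^+4 * l3 * y1 + -2%:R * l0^+2 * l2^+5 * l3 * y2 + -2%:R * l0^+3 * l2^+4 * l3 * y2 + -3%:R * l0^+2 * l2^+4 * l3^+2 * y3 + -3%:R * l0^+3 * l2^+3 * l3^+2 * y3 + -10%:R * l1^+3 * l2^+4 * l3 * y1 + -14%:R * l1^+4 * l2^+3 * l3 * y1 + -8%:R * l1^+2 * l2^+5 * l3 * y2 + -12%:R * l1^+3 * l2^+4 * l3 * y2 + -12%:R * l1^+2 * l2^+4 * l3^+2 * y3 + -7%:R * l1^+3 * l2^+4 * l3 * y3 + -10%:R * l1^+2 * l2^+4 * l3^+2 * y1 + -11%:R * l0 * l1 * l2^+4 * l3^+2 * y1 + -8%:R * l1 * l2^+5 * l3^+2 * y2 + -7%:R * l1 * l2^+4 * l3^+3 * y3 + -l0^+2 * l2^+4 * l3^+2 * y1 + -2%:R * l0 * l2^+5 * l3^+2 * y2 + -3%:R * l0 * l2^+4 * l3^+3 * y3 + -l0 * l1^+5 * l3^+2 * y1 + -11%:R * l0^+2 * l1^+4 * l3^+2 * y1 + -6%:R * l0 * l1^+4 * l2 * l3^+2 * y2 + -2%:R * l0^+2 * l1^+4 * l3^+2 * y2 + -9%:R * l0 * l1^+4 * l2 * l3^+2 * y3 + -9%:R * l0^+2 * l1^+3 * l3^+3 * y3 + -3%:R * l0^+2 * l1^+4 * l3^+2 * y3 + -3%:R * l0 * l1^+4 *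 l3^+3 * y1 + -12%:R * l0^+2 * l1^+3 * l3^+3 * y1 + -4%:R * l0^+2 * l1^+3 * l3^+3 * y2 + -9%:R * l0^+2 * l1^+2 * l3^+4 * y3 + -10%:R * l0^+3 * l1^+3 * l3^+2 * y1 + -8%:R * l0^+3 * l1^+3 * l3^+2 * y2 + -12%:R * l0^+3 * l1^+2 * l3^+3 * y3 + -7%:R * l0^+3 * l1^+3 * l3^+2 * y3 + -10%:R * l0^+3 * l1^+2 * l3^+3 * y1 + -8%:R * l0^+3 * l1^+2 * l3^+3 * y2 + -7%:R * l0^+3 * l1 * l3^+4 * y3 + -l1^+5 * l3^+3 * y1 + -2%:R * l1^+4 * l2 * l3^+3 * y2 + -2%:R * l0 * l1^+4 * l3^+3 * y2 + -6%:R * l1^+3 * l2 * l3^+4 * y3 + -3%:R * l1^+4 * l2 * l3^+3 * y3 + -6%:R * l0 * l1^+3 * l3^+4 * y3 + -3%:R * l0 * l1^+4 * l3^+3 * y3 + -l1^+4 * l3^+4 * y1 + -2%:R * l0 * l1^+3 * l3^+4 * y1 + -2%:R * l1^+3 * l2 * l3^+4 * y2 + -2%:R * l0 * l1^+3 * l3^+4 * y2 + -3%:R * l1^+2 * l2 * l3^+5 * y3 + -3%:R * l0 * l1^+2 * l3^+5 * y3 + -4%:R * l0^+2 * l1^+2 * l3^+4 * y1 + -2%:R * l0^+2 * l1^+2 * l3^+4 * y2 + -3%:R * l0^+2 * l1 * l3^+5 * y3 + -8%:R * l0 * l1^+5 * l2 * l3 * y1 + -22%:R * l0^+2 * l1^+4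 * l2 * l3 * y1 + -12%:R * l0 * l1^+4 * l2^+2 * l3 * y2 + -10%:R * l0^+2 * l1^+4 * l2 * l3 * y2 + -12%:R * l0 * l1^+4 * l2^+2 * l3 * y3 + -9%:R * l0^+2 * l1^+4 * l2 * l3 * y3 + -14%:R * l0^+3 * l1^+3 * l2 * l3 * y1 + -12%:R * l0^+3 * l1^+3 * l2 * l3 * y2 + -10%:R * l0^+3 * l1^+3 * l2 * l3 * y3 + -2%:R * l1^+5 * l2 * l3^+2 * y1 + -4%:R * l1^+4 * l2^+2 * l3^+2 * y2 + -6%:R * l1^+4 * l2^+2 * l3^+2 * y3 + -7%:R * l0 * l1^+5 * l2^+2 * y1 + -11%:R * l0^+2 * l1^+4 * l2^+2 * y1 + -8%:R * l0 * l1^+4 * l2^+3 * y2 + -8%:R * l0^+2 * l1^+4 * l2^+2 * y2 + -6%:R * l0 * l1^+4 * l2^+3 * y3 + -6%:R * l0^+2 * l1^+4 * l2^+2 * y3 + -4%:R * l0^+3 * l1^+3 * l2^+2 * y1 + -4%:R * l0^+3 * l1^+3 * l2^+2 * y2 + -3%:R * l0^+3 * l1^+3 * l2^+2 * y3 + -4%:R * l1^+5 * l2^+2 * l3 * y1 + -4%:R * l1^+4 * l2^+3 * l3 * y2 + -4%:R * l1^+4 * l2^+3 * l3 * y3 + -3%:R * l0^+3 * l2 * l3^+4 * y1 + -3%:R * l0^+3 * l1 * l3^+4 * y1 + -2%:R * l0^+3 * l2 * l3^+4 * y2 + -2%:R * l0^+3 * l1 * l3^+4 * y2 + -l0^+3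 * l3^+5 * y3 + -3%:R * l1 * l2^+3 * l3^+4 * y1 + -3%:R * l0 * l2^+3 * l3^+4 * y1 + -2%:R * l2^+4 * l3^+4 * y2 + -l2^+3 * l3^+5 * y3 + -3%:R * l0^+2 * l1^+5 * l3 * y1 + -3%:R * l0^+3 * l1^+4 * l3 * y1 + -2%:R * l0^+3 * l1^+4 * l3 * y2 + -l0^+3 * l1^+4 * l3 * y3 + -3%:R * l1 * l2^+4 * l3^+3 * y1 + -3%:R * l0 * l2^+4 * l3^+3 * y1 + -2%:R * l2^+5 * l3^+3 * y2 + -l2^+4 * l3^+4 * y3 + -3%:R * l0^+2 * l1^+5 * l2 * y1 + -3%:R * l0^+3 * l1^+4 * l2 * y1 + -2%:R * l0^+3 * l1^+4 * l2 * y2 + -l0^+3 * l1^+4 * l2 * y3 + -3%:R * l1^+4 * l2^+4 * y1 + -3%:R * l1^+5 * l2^+3 * y1 + -2%:R * l1^+3 * l2^+5 * y2 + -2%:R * l1^+4 * l2^+4 * y2 + -l1^+4 * l2^+4 * y3 + -9%:R * l1^+3 * l2^+2 * l3^+3 * y0 + -9%:R * l0 * l1^+4 * l2 * l3^+2 * y0 + -9%:R * l0^+2 * l1^+3 * l3^+3 * y0 + -4%:R * l0^+2 * l1^+4 * l3^+2 * y0 + -9%:R * l0 * l1^+2 * l2 * l3^+4 * y0 + -4%:R * l1^+2 * l2^+2 * l3^+4 * y0 + -9%:R * l0^+2 * l1 * l2^+4 * l3 * y0 + -9%:R * l0^+3 * l1^+2 * l2^+3 * y0 + -9%:R * l0^+4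 * l1 * l2^+2 * l3 * y0 + -4%:R * l0^+4 * l1^+2 * l2^+2 * y0 + -9%:R * l0^+3 * l2^+3 * l3^+2 * y0 + -4%:R * l0^+2 * l2^+4 * l3^+2 * y0 + -l1^+3 * l2 * l3^+4 * y0 + -l0 * l1^+4 * l3^+3 * y0 + -l0^+3 * l2^+4 * l3 * y0 + -l0^+4 * l1 * l2^+3 * y0)); rewrite /E0f /Df /Pf /nf; ring. Qed.

Lemma Pshift (l0 l1 l2 l3 : F) : Pf l1 l2 l3 l0 = Pf l0 l1 l2 l3 + nf l0 l1 l2 l3.
Proof. by apply: (@c2 _ _ (-l0 * l3 + -l1 * l2)); rewrite /Pf /nf; ring. Qed.

Lemma sE0f l0 l1 l2 l3 y0 y1 y2 y3 :
  s (E0f l0 l1 l2 l3 y0 y1 y2 y3) = E0f (s l0) (s l1) (s l2) (s l3) (s y0) (s y1) (s y2) (s y3).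
Proof. by rewrite /E0f !(sD, sM). Qed.

Lemma D_neq0 (lam : F) : (h %% 4 != 2)%N -> s lam != lam ->
  Df lam (s lam) (s (s lam)) (s (s (s lam))) != 0.
Proof.
move=> hm hl.
have sP : s (Pf lam (s lam) (s (s lam)) (s (s (s lam)))) =
    Pf lam (s lam) (s (s lam)) (s (s (s lam))) + nf lam (s lam) (s (s lam)) (s (s (s lam))).
  by rewrite -Pshift /Pf !(sD, sM) s4.
have sn : s (nf lam (s lam) (s (s lam)) (s (s (s lam)))) = nf lam (s lam) (s (s lam)) (s (s (s lam))).
  by rewrite /nf !(sD, sM) s4 mulrC addrC [_ + s (s lam)]addrC.
rewrite /Df; move: sP sn.
set P := Pf _ _ _ _; set n := nf _ _ _ _ => sP sn.
have [n0|nn0] := eqVneq n 0.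
  have -> : P ^+ 4 + n ^+ 3 * P + n ^+ 4 = P ^+ 4 by rewrite n0; ring.
  rewrite expf_eq0 /= /P /Pf mulf_eq0 negb_or.
  have h1 : lam + s lam != 0 by rewrite add_eq0 eq_sym.
  by rewrite h1 /= -sD -sD s_eq0 s_eq0.
apply/negP => /eqP HD.
set T := P / n.
have H4 : T ^+ 4 = T + 1.
  apply/eqP; rewrite -add_eq0 addrA.
  have -> : T ^+ 4 + T + 1 = (P ^+ 4 + n ^+ 3 * P + n ^+ 4) / n ^+ 4.
    by rewrite /T; field; rewrite nn0.
  by rewrite HD mul0r.
have Hs : s T = T + 1.
  by rewrite /T sM sV sP sn; field.
by move: hm; rewrite (cyc_contra H4 Hs).
Qed.

Lemma core (lam x y : F) : (h %% 4 != 2)%N -> s lam != lam ->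
  s (lam * x) + s (s (lam * y)) = lam * (s x + s (s y)) ->
  s (s (lam * x)) + s (lam * y) + s (s (lam * y)) = lam * (s (s x) + s y + s (s y)) ->
  x = 0 /\ y = 0.
Proof.
move=> hm hl; rewrite !sM => hA hB.
have hA1 := congr1 s hA; rewrite !(sD, sM) in hA1.
have E0 := E0_lem y hB hA1.
have E1 := congr1 s E0; rewrite sE0f !s4 s0 in E1.
have E2 := congr1 s E1; rewrite sE0f !s4 s0 in E2.
have E3 := congr1 s E2; rewrite sE0f !s4 s0 in E3.
have := cramer lam (s lam) (s (s lam)) (s (s (s lam))) y (s y) (s (s y)) (s (s (s y))).
rewrite E0 E1 E2 E3 !mulr0 !addr0 => /eqP; rewrite mulf_eq0 (negbTE (D_neq0 hm hl)) /= => /eqP y0.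
split=> //; move: hA; rewrite y0 s0 s0 !mulr0 !addr0 => /eqP.
rewrite -subr_eq0 -mulrBl mulf_eq0 subr_eq0 (negbTE hl) /= s_eq0 => /eqP //.
Qed.

Hypothesis hpos : (0 < h)%N.

Lemma q_gt1 : (1 < q)%N.
Proof. by rewrite -{1}(expn0 2) ltn_exp2l. Qed.

Lemma card_ker_im (f : F -> F) : (forall x y, f (x + y) = f x + f y) ->
  #|F| = (#|[set x | f x == 0%R]| * #|[set f x | x in F]|)%N.
Proof.
move=> fD.
have f0 : f 0 = 0 by apply: (addrI (f 0)); rewrite -fD !addr0.
have fN : forall x, f (- x) = - f x.
  by move=> x; apply: (addrI (f x)); rewrite -fD !subrr f0.
have -> : #|F| = (\sum_(x : F) 1)%N by rewrite sum1_card.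
rewrite (partition_big f (mem [set f x | x in F])) /=; last first.
  by move=> x _; apply: imset_f.
rewrite (eq_bigr (fun _ => #|[set x | f x == 0%R]|)).
  by rewrite sum_nat_const mulnC.
move=> y /imsetP[x0 _ ->].
rewrite sum1dep_card -(card_imset [set x | f x == 0%R] (addrI x0)).
apply: eq_card => x; rewrite [in LHS]inE /=.
apply/eqP/imsetP => [fx|[k]].
  exists (x - x0); first by rewrite inE fD fN fx subrr.
  by rewrite addrC subrK.
by rewrite inE => /eqP fk ->; rewrite fD fk addr0.
Qed.

Lemma card_roots_lt (p : {poly F}) : p != 0 -> (#|[set x | root p x]| < size p)%N.
Proof.
move=> p0; rewrite cardE; apply: max_poly_roots => //; last exact: enum_uniq.
by apply/allP => x; rewrite mem_enum inE.
Qed.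

Definition Tr (x : F) := x + s x + s (s x) + s (s (s x)).

Lemma Tr_poly x : Tr x = ('X^(q * q * q) + 'X^(q * q) + 'X^q + 'X : {poly F}).[x].
Proof. by rewrite !hornerE /Tr /s -!exprM; ring. Qed.

Lemma size_Trp : size ('X^(q * q * q) + 'X^(q * q) + 'X^q + 'X : {poly F}) = (q * q * q).+1.
Proof.
have q1 := q_gt1.
have l1 : (q < q * q)%N by nia.
have l2 : (q * q < q * q * q)%N by nia.
rewrite -!addrA size_polyDl; first by rewrite size_polyXn.
rewrite size_polyXn ltnS.
apply: leq_trans (size_polyD _ _) _; rewrite geq_max size_polyXn.
apply/andP; split; first lia.
apply: leq_trans (size_polyD _ _) _; rewrite geq_max size_polyXn size_polyX.
apply/andP; split; lia.
Qed.

Lemma size_Fqp : size ('X^q + 'X : {poly F}) = q.+1.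
Proof. by rewrite size_polyDl size_polyXn // size_polyX ltnS q_gt1. Qed.

Definition Kset := [set x : F | x + s x == 0].
Definition Iset := [set x + s x | x in F].
Definition Zset := [set x : F | Tr x == 0].

Lemma I_sub_Z : Iset \subset Zset.
Proof.
apply/subsetP => _ /imsetP[x _ ->].
rewrite inE /Tr !sD s4.
by apply/eqP; apply: (@c2 _ _ (s x + s (s x) + s (s (s x)) + x)); ring.
Qed.

Lemma card_K_I : #|Kset| = q /\ #|Iset| = (q * q * q)%N.
Proof.
have hK : (#|Kset| <= q)%N.
  have p0 : ('X^q + 'X : {poly F}) != 0 by rewrite -size_poly_eq0 size_Fqp.
  rewrite -ltnS -size_Fqp; apply: leq_ltn_trans (card_roots_lt p0).
  apply: subset_leq_card; apply/subsetP => x; rewrite !inE /root !hornerE addrC.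
  by [].
have hZ : (#|Zset| <= q * q * q)%N.
  have p0 : ('X^(q * q * q) + 'X^(q * q) + 'X^q + 'X : {poly F}) != 0.
    by rewrite -size_poly_eq0 size_Trp.
  rewrite -ltnS -size_Trp; apply: leq_ltn_trans (card_roots_lt p0).
  apply: subset_leq_card; apply/subsetP => x; rewrite !inE /root -Tr_poly.
  by [].
have hI := leq_trans (subset_leq_card I_sub_Z) hZ.
have fD : forall x y, (x + y) + s (x + y) = (x + s x) + (y + s y).
  by move=> x y; rewrite sD addrACA.
have hc : #|F| = (#|Kset| * #|Iset|)%N := card_ker_im fD.
move: hc; rewrite hcard => hc.
have q0 := q_gt0.
split; nia.
Qed.

Lemma hilbert90 u : Tr u = 0 -> exists l, l + s l = u.
Proof.
move=> hu.
have eIZ : Iset = Zset.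
  apply/eqP; rewrite eqEcard I_sub_Z /=.
  case: card_K_I => _ ->.
  have p0 : ('X^(q * q * q) + 'X^(q * q) + 'X^q + 'X : {poly F}) != 0.
    by rewrite -size_poly_eq0 size_Trp.
  rewrite -ltnS -size_Trp; apply: leq_ltn_trans (card_roots_lt p0).
  apply: subset_leq_card; apply/subsetP => x; rewrite !inE /root -Tr_poly.
  by [].
have : u \in Zset by rewrite inE hu.
by rewrite -eIZ => /imsetP[l _ ->]; exists l.
Qed.

Local Notation FqT := {x : F | s x == x}.

Lemma card_FqT : #|{: FqT}| = q.
Proof.
rewrite card_sig; case: card_K_I => <- _.
by apply: eq_card => x; rewrite !inE add_eq0 eq_sym.
Qed.

Definition indep k (e : 'I_k -> F) := forall c : 'I_k -> F, (forall i, s (c i) = c i) ->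
  \sum_(i < k) c i * e i = 0 -> forall i, c i = 0.

Definition comb k (e : 'I_k -> F) (c : {ffun 'I_k -> FqT}) : F := \sum_(i < k) val (c i) * e i.
Definition span k (e : 'I_k -> F) := [set comb e c | c in {ffun 'I_k -> FqT}].

Lemma comb_inj k (e : 'I_k -> F) : indep e -> injective (comb e).
Proof.
move=> ie c c' H; apply/ffunP => i; apply: val_inj; apply/eqP; rewrite -subr_eq0; apply/eqP.
apply: (ie (fun i => val (c i) - val (c' i))) => [j|].
  by rewrite sB (eqP (valP (c j))) (eqP (valP (c' j))).
rewrite (eq_bigr (fun i => val (c i) * e i - val (c' i) * e i)); last by move=> j _; rewrite mulrBl.
by rewrite sumrB; move: H; rewrite /comb => ->; rewrite subrr.
Qed.

Lemma card_span k (e : 'I_k -> F) : indep e -> #|span e| = (q ^ k)%N.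
Proof.
move=> ie; rewrite /span card_imset; last exact: comb_inj.
by rewrite card_ffun card_FqT card_ord.
Qed.

Definition ext k (e : 'I_k -> F) (z : F) : 'I_k.+1 -> F :=
  fun i => if unlift ord_max i is Some j then e j else z.

Lemma ext_widen k (e : 'I_k -> F) z j : ext e z (widen_ord (leqnSn k) j) = e j.
Proof.
have -> : widen_ord (leqnSn k) j = lift ord_max j by apply/val_inj; rewrite /= /bump leqNgt ltn_ord.
by rewrite /ext liftK.
Qed.

Lemma ext_max k (e : 'I_k -> F) z : ext e z ord_max = z.
Proof. by rewrite /ext unlift_none. Qed.

Lemma extend k (e : 'I_k -> F) : (k < 4)%N -> indep e -> exists e' : 'I_k.+1 -> F, indep e'.
Proof.
move=> k4 ie.
have [z zn] : exists z, z \notin span e.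
  apply/existsP; rewrite -negb_forall; apply/negP => /forallP all.
  have : (#|F| <= #|span e|)%N.
    by rewrite -cardsT; apply: subset_leq_card; apply/subsetP => z _; apply: all.
  by rewrite card_span // hcard leqNgt ltn_exp2l ?q_gt1 // k4.
exists (ext e z) => c hc hs.
rewrite big_ord_recr /= ext_max in hs.
rewrite (eq_bigr (fun j => c (widen_ord (leqnSn k) j) * e j)) in hs; last first.
  by move=> j _; rewrite ext_widen.
set S := \sum_(j < k) _ in hs.
have cmax : c ord_max = 0.
  apply/eqP; apply/negPn/negP => cn0; apply: (negP zn).
  have hd : forall j, s (- c (widen_ord (leqnSn k) j) / c ord_max) ==
                        - c (widen_ord (leqnSn k) j) / c ord_max.
    by move=> j; rewrite sM sN sV !hc.
  apply/imsetP; exists [ffun j => (exist (fun x => s x == x) _ (hd j) : FqT)] => //.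
  rewrite /comb (eq_bigr (fun j => (- (c (widen_ord (leqnSn k) j) * e j)) / c ord_max)); last first.
    by move=> j _; rewrite ffunE /= mulrAC mulNr.
  rewrite -big_distrl /= sumrN -/S.
  have -> : S = - (c ord_max * z) by apply/eqP; rewrite -addr_eq0 hs.
  by rewrite opprK mulrC mulKf.
rewrite cmax mul0r addr0 in hs.
have hw := ie (fun j => c (widen_ord (leqnSn k) j)) (fun j => hc _) hs.
move=> i; case: (unliftP ord_max i) => [j ->|->] //.
by rewrite -(hw j); congr c; apply/val_inj; rewrite /= /bump leqNgt ltn_ord.
Qed.

Lemma Fq_basis : exists e : 'I_(4%N) -> F, indep e /\
  forall z, exists c : 'I_(4%N) -> F, (forall i, s (c i) = c i) /\ z = \sum_(i < 4%N) c i * e i.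
Proof.
have : forall k, (k <= 4)%N -> exists e : 'I_k -> F, indep e.
  elim=> [|k IH] hk; first by exists (fun _ => 0) => c _ _ [m hm]; exfalso; rewrite ltn0 in hm.
  by have [e ie] := IH (ltnW hk); exact: (extend hk ie).
case/(_ 4%N (leqnn 4%N)) => e ie; exists e; split=> // z.
have : z \in span e.
  have /eqP -> : span e == setT by rewrite eqEcard subsetT cardsT card_span // hcard; apply: leqnn.
  by rewrite inE.
case/imsetP => c _ ->; exists (fun i => val (c i)); split=> // i.
exact: (eqP (valP (c i))).
Qed.

Definition vec (x y : F) : 'rV[F]_4 :=
  \row_(i < 4) [:: x; y; x ^+ q + y ^+ (q ^ 2); x ^+ (q ^ 2) + y ^+ q + y ^+ (q ^ 2)]`_i.

Lemma vecE x y : vec x y = \row_(i < 4) [:: x; y; s x + s (s y); s (s x) + s y + s (s y)]`_i.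
Proof. by apply/rowP => i; rewrite !mxE !s2E. Qed.

Lemma vecU x y : vec x y \in U_h h F.
Proof. by apply/existsP; exists x; apply/existsP; exists y. Qed.

Lemma memUP u : reflect (exists x y, u = vec x y) (u \in U_h h F).
Proof.
apply: (iffP existsP) => [[x /existsP[y /eqP ->]]|[x [y ->]]]; first by exists x, y.
by exists x; apply/existsP; exists y.
Qed.

Lemma vecD x y x' y' : vec (x + x') (y + y') = vec x y + vec x' y'.
Proof.
rewrite !vecE; apply/rowP => i; rewrite !mxE.
case: i => [[|[|[|[|i]]]] hi] /=; rewrite ?sD ?nth_nil; ring.
Qed.

Lemma vecZ c x y : s c = c -> c *: vec x y = vec (c * x) (c * y).
Proof.
move=> hc; rewrite !vecE; apply/rowP => i; rewrite !mxE.
case: i => [[|[|[|[|i]]]] hi] /=; rewrite ?sM ?hc ?nth_nil; ring.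
Qed.

Lemma vec0 : vec 0 0 = 0.
Proof.
rewrite !vecE; apply/rowP => i; rewrite !mxE.
case: i => [[|[|[|[|i]]]] hi] /=; rewrite ?s0 ?nth_nil; ring.
Qed.

Lemma vec_coord x y : vec x y 0 (@Ordinal 4 0 isT) = x /\ vec x y 0 (@Ordinal 4 1 isT) = y.
Proof. by rewrite !mxE. Qed.

Lemma vec_eq0 x y : vec x y = 0 -> x = 0 /\ y = 0.
Proof.
move=> H; have [h1 h2] := vec_coord x y.
by split; [rewrite -h1 | rewrite -h2]; rewrite H mxE.
Qed.

Lemma vec_inj x y x' y' : vec x y = vec x' y' -> x = x' /\ y = y'.
Proof.
move=> H; have [h1 h2] := vec_coord x y; have [h1' h2'] := vec_coord x' y'.
by split; [rewrite -h1 -h1' | rewrite -h2 -h2']; rewrite H.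
Qed.

Lemma vec_sum n (a b : 'I_n -> F) :
  \sum_(j < n) vec (a j) (b j) = vec (\sum_(j < n) a j) (\sum_(j < n) b j).
Proof.
elim: n a b => [|n IH] a b; first by rewrite !big_ord0 vec0.
by rewrite !big_ord_recr /= IH vecD.
Qed.

Lemma FqE c : (c \in Fq F q) = (s c == c).
Proof. by []. Qed.

Lemma dimU : Fq_dim F q 4 (U_h h F) 8.
Proof.
have [e [ie se]] := Fq_basis.
have sl : forall j : 'I_4, @split 4 4 (lshift 4 j) = inl j := fun j => unsplitK (inl j).
have sr : forall j : 'I_4, @split 4 4 (rshift 4 j) = inr j := fun j => unsplitK (inr j).
pose v := fun i : 'I_8 => match @split 4 4 i with inl j => vec (e j) 0 | inr j => vec 0 (e j) end.
exists v; split.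
- by move=> i; rewrite /v; case: split => j; exact: vecU.
- move=> c hc hs.
  have hc' : forall i, s (c i) = c i by move=> i; apply/eqP; rewrite -FqE.
  move: hs; rewrite (@big_split_ord _ _ _ 4 4) /= /v.
  rewrite (eq_bigr (fun j : 'I_(4%N) => vec (c (lshift 4 j) * e j) 0)); last first.
    by move=> j _; rewrite sl vecZ // mulr0.
  rewrite [X in _ + X](eq_bigr (fun j : 'I_(4%N) => vec 0 (c (rshift 4 j) * e j))); last first.
    by move=> j _; rewrite sr vecZ // mulr0.
  rewrite !vec_sum -vecD !big1_eq addr0 add0r => /vec_eq0 [hL hR].
  have zL := ie _ (fun j => hc' _) hL; have zR := ie _ (fun j => hc' _) hR.
  by move=> i; rewrite -(@splitK 4 4 i); case: split => j /=; [exact: zL|exact: zR].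
- move=> u /memUP [x [y ->]].
  have [a [ha ->]] := se x; have [b [hb ->]] := se y.
  exists (fun i : 'I_8 => match @split 4 4 i with inl j => a j | inr j => b j end).
    by move=> i; rewrite FqE; case: split => j; apply/eqP.
  rewrite (@big_split_ord _ _ _ 4 4) /= /v.
  rewrite (eq_bigr (fun j : 'I_(4%N) => vec (a j * e j) 0)); last first.
    by move=> j _; rewrite sl vecZ // mulr0.
  rewrite [X in _ = _ + X](eq_bigr (fun j : 'I_(4%N) => vec 0 (b j * e j))); last first.
    by move=> j _; rewrite sr vecZ // mulr0.
  by rewrite !vec_sum -vecD !big1_eq addr0 add0r.
Qed.

Lemma I0_elim (P : 'I_0 -> Prop) i : P i.
Proof. by case: i => m hm; exfalso; rewrite ltn0 in hm. Qed.

Lemma no_extra mu x y : (h %% 4 != 2)%N -> s mu != mu -> mu *: vec x y \in U_h h F ->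
  x = 0 /\ y = 0.
Proof.
move=> hm hmu /memUP [x' [y' H]].
have E : forall i, (mu *: vec x y) 0 i = vec x' y' 0 i by move=> i; rewrite H.
have e0 := E (@Ordinal 4 0 isT); have e1 := E (@Ordinal 4 1 isT).
have e2 := E (@Ordinal 4 2 isT); have e3 := E (@Ordinal 4 3 isT).
rewrite !vecE !mxE /= in e0 e1 e2 e3.
rewrite -e0 -e1 in e2 e3.
by apply: (core hm hmu); [rewrite e2 | rewrite e3].
Qed.

Lemma scat : (h %% 4 != 2)%N -> scattered F q 4 (U_h h F).
Proof.
move=> hm w wn0.
case: (pickP [pred v | (v \in [predI U_h h F & Fspan F 4 w]) && (v != 0)]) => [v /andP [vS vn0] | none].
- exists 1%N => //; exists (fun _ => v); split.
  + by move=> _.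
  + move=> c hc; rewrite big_ord1 => /eqP; rewrite scaler_eq0 (negbTE vn0) orbF => /eqP c0 i.
    by rewrite (ord1 i).
  + move=> u uS.
    move: vS uS; rewrite !inE => /andP [vU /existsP [l' /eqP vl]] /andP [uU /existsP [l /eqP ul]].
    have l'0 : l' != 0 by apply: contraNneq vn0 => l0; rewrite vl l0 scale0r.
    have umu : u = (l / l') *: v by rewrite vl scalerA divfK // ul.
    exists (fun _ => l / l').
      move=> _; rewrite FqE; apply/negPn/negP => hmu.
      move/memUP: vU => [x [y vxy]].
      have : (l / l') *: vec x y \in U_h h F by rewrite -vxy -umu.
      case/(no_extra hm hmu) => x0 y0.
      by move: vn0; rewrite vxy x0 y0 vec0 eqxx.
    by rewrite big_ord1.
- exists 0%N => //; exists (fun _ => 0); split.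
  + exact: I0_elim.
  + by move=> c _ _; apply: I0_elim.
  + move=> u uS; exists (fun _ => 0); first exact: I0_elim.
    rewrite big_ord0; have := none u; rewrite /= uS /= => /negbFE/eqP.
    done.
Qed.

Lemma q_mod5 : (h %% 4 == 2)%N -> (q %% 5 = 4)%N.
Proof.
move/eqP=> hm; rewrite (divn_eq h 4) hm expnD [(_ * 4)%N]mulnC expnM.
by rewrite -modnMml -modnXm /= exp1n.
Qed.

Lemma exists_ur : (h %% 4 == 2)%N ->
  exists u rho : F, [/\ u != 0, rho != 1, rho ^+ 5 = 1 & s u = rho * u].
Proof.
move=> hm.
have q1 := q_gt1.
have hN : (#|F|.-1 = (q - 1) * ((q + 1) * (q * q + 1)))%N.
  rewrite hcard !expnS expn0 muln1; nia.
have d5 : (5 %| q + 1)%N by rewrite /dvdn -modnDml q_mod5.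
have dv : (5 * (q - 1) %| #|F|.-1)%N by rewrite hN mulnC dvdn_mul // dvdn_mulr.
have [g Hg] : exists g, [set: {unit F}] = <[g]>%g.
  by apply/cyclicP; apply: (field_unit_group_cyclic [set: {unit F}]%G).
have og : #[g]%g = #|F|.-1 by rewrite /order -Hg card_finField_unit.
set N := #|F|.-1 in hN dv og.
set m := (N %/ (5 * (q - 1)))%N.
have mN : (m * (5 * (q - 1)) = N)%N by rewrite divnK.
have N0 : (0 < N)%N by rewrite /N -subn1 subn_gt0 finNzRing_gt1.
exists (val (g ^+ m)%g), (val (g ^+ (m * (q - 1)))%g); split.
- by rewrite -unitfE; exact: valP.
- apply/negP => /eqP h1.
  have : (g ^+ (m * (q - 1)))%g = 1%g by apply: val_inj; rewrite h1.
  move/eqP; rewrite -order_dvdn og => hd.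
  have k0 : (0 < m * (q - 1))%N.
    by move: N0; rewrite -mN mulnCA muln_gt0 => /andP[].
  have := dvdn_leq k0 hd; rewrite -mN mulnCA.
  by rewrite leqNgt ltn_Pmull.
- rewrite -FinRing.val_unitX -expgM (_ : (m * (q - 1) * 5 = N)%N); last by rewrite -mN [(5 * _)%N]mulnC mulnA.
  by rewrite -og expg_order.
- rewrite /s -FinRing.val_unitX -FinRing.val_unitM -expgM -expgD; congr (val (g ^+ _)%g).
  by rewrite -mulnSr subn1 prednK // q_gt0.
Qed.

Lemma sX a k : s (a ^+ k) = s a ^+ k.
Proof. by rewrite /s -!exprM mulnC. Qed.

Lemma c3 (P A B X Y : F) : P = 0 -> X = Y + P * A + 2%:R * B -> X = Y.
Proof. by move=> -> ->; rewrite mul0r addr0 char2 mul0r addr0. Qed.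

Lemma not_scat : (h %% 4 == 2)%N -> ~ scattered F q 4 (U_h h F).
Proof.
move=> hm sc.
have [u [rho [u0 r1 r5 hsu]]] := exists_ur hm.
have hsr4 : s rho = rho ^+ 4 by rewrite /s -(expr_mod _ r5) q_mod5.
have hsr : s rho = rho * rho * rho * rho by rewrite hsr4; ring.
have phi : rho ^+ 4 + rho ^+ 3 + rho ^+ 2 + rho + 1 = 0.
  have : (rho - 1) * (rho ^+ 4 + rho ^+ 3 + rho ^+ 2 + rho + 1) = 0.
    by rewrite (_ : (rho - 1) * _ = rho ^+ 5 - 1); [rewrite r5 subrr | ring].
  by move/eqP; rewrite mulf_eq0 subr_eq0 (negbTE r1) => /eqP.
have su2 : s (s u) = u by rewrite hsu sM hsr4 hsu mulrA -exprSr r5 mul1r.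
have hTr : Tr u = 0 by rewrite /Tr su2 hsu; apply: (@c2 _ _ (u + rho * u)); ring.
have [l hl] := hilbert90 hTr.
have hsl : s l = l + u by rewrite -hl; apply: (@c2 _ _ (- l)); ring.
have v0 : vec rho (1 + rho * rho) != 0.
  apply/negP => /eqP /vec_eq0 [x0 _]; move: r5; rewrite x0 expr0n /= => /eqP.
  by rewrite eq_sym oner_eq0.
have lv : l *: vec rho (1 + rho * rho) = vec (l * rho) (l * (1 + rho * rho)).
  rewrite !vecE; apply/rowP => i; rewrite !mxE.
  case: i => [[|[|[|[|i]]]] hi] /=; rewrite ?nth_nil ?mulr0 //.
  + rewrite !(sD, sM, s1, hsl, hsu, hsr).
    by apply: (@c3 _ (-rho^+29 * u + rho^+27 * u + -rho^+24 * u + rho^+22 * u + -rho^+19 * u + rho^+17 * u + -rho^+14 * u + rho^+12 * u + -rho^+9 * u + rho^+7 * u + -rho^+4 * u + rho^+2 * u + -u) 0 _ _ phi); ring.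
  + rewrite !(sD, sM, s1, hsl, hsu, hsr).
    by apply: (@c3 _ (-rho^+29 * u + rho^+27 * u + -rho^+24 * u + rho^+22 * u + -rho^+19 * u + rho^+17 * u + -rho^+14 * u + -rho^+13 * u + rho^+12 * u + rho^+11 * u + -rho^+9 * u + -rho^+8 * u + rho^+7 * u + rho^+6 * u + -2%:R * rho^+4 * u + rho^+2 * u + rho * u) (-u + -rho * u + -rho^+3 * u + -rho^+2 * u) _ _ phi); ring.
have [d d1 [e [eS ei espan]]] := sc _ v0.
have vS : vec rho (1 + rho * rho) \in [predI U_h h F & Fspan F 4 (vec rho (1 + rho * rho))].
  by rewrite inE vecU /=; apply/existsP; exists 1; rewrite scale1r.
have lS : l *: vec rho (1 + rho * rho) \in [predI U_h h F & Fspan F 4 (vec rho (1 + rho * rho))].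
  by rewrite inE lv vecU /=; apply/existsP; exists l; rewrite lv.
case: d d1 e eS ei espan => [|[|d]] // _ e eS ei espan.
  have [c _ hc] := espan _ vS.
  by move: v0; rewrite hc big_ord0 eqxx.
have [c0 hc0 e0] := espan _ vS; have [c1 hc1 e1] := espan _ lS.
rewrite big_ord1 in e0; rewrite big_ord1 in e1.
have c00 : c0 0 != 0 by apply: contraNneq v0 => z; rewrite e0 z scale0r.
have sc0 : s (c0 0) = c0 0 by apply/eqP; rewrite -FqE.
have sc1 : s (c1 0) = c1 0 by apply/eqP; rewrite -FqE.
have : l *: vec rho (1 + rho * rho) = (c1 0 / c0 0) *: vec rho (1 + rho * rho).
  by rewrite e1 e0 scalerA divfK.
move/eqP; rewrite -subr_eq0 -scalerBl scaler_eq0 (negbTE v0) orbF subr_eq0 => /eqP hl'.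
have : s l = l by rewrite hl' sM sV sc0 sc1.
rewrite hsl => /eqP; rewrite -subr_eq0 addrC addKr => /eqP u00.
by move: u0; rewrite u00 eqxx.
Qed.

End Main.


Theorem theorem4p1 (h : nat) (F : finFieldType) :
  (0 < h)%N -> #|F| = ((2 ^ h) ^ 4)%N ->
  (@max_scattered F (2 ^ h) 4 4 (U_h h F) <-> (h %% 4 != 2)%N).
Proof.
move=> hpos hcard; split.
- case=> sc _; apply/negP => hm.
  exact: (@not_scat F h hcard hpos hm sc).
- move=> hm; split.
  + exact: (@scat F h hcard hm).
  + exact: (@dimU F h hcard hpos).
Qed.
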